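(* Let $G$ be a group containing a non-abelian torsion-free nilpotent subgroup. Then for no integer $N\geq 1$ is there an injective algebra morphism $\mathbb{Z}[G]\to M_N(\mathbb{C})$.
   Context: $\mathbb{Z}[G]$ is the integral group ring of $G$ and $M_N(\mathbb{C})$ the algebra of complex $N\times N$ matrices. *)

(* Defs.v *)
From HB Require Import structures.
From mathcomp Require Import all_boot all_order all_algebra.
From mathcomp Require Import finmap.
From mathcomp Require Import complex.
From mathcomp Require Import Rstruct.

Set Implicit Arguments.
Unset Strict Implicit.
Unset Printing Implicit Defensive.

Import Order.TTheory GRing.Theory Num.Theory.
Local Open Scope ring_scope.

Section GroupNotions.
Variable G : groupType.
Local Open Scope group_scope.

Definition is_subgroup (H : G -> Prop) : Prop :=
  [/\ H 1, (forall x y, H x -> H y -> H (x * y)) & (forall x, H x -> H x^-1)].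

Definition gen_subgroup (S : G -> Prop) : G -> Prop :=
  fun g => forall K, is_subgroup K -> (forall s, S s -> K s) -> K g.

(* lower central series of H: gamma_1(H) = H, gamma_{i+1}(H) = [gamma_i(H), H]
   (here indexed from 0) *)
Fixpoint lower_central (H : G -> Prop) (n : nat) : G -> Prop :=
  match n with
  | 0 => H
  | n'.+1 => gen_subgroup
      (fun g => exists x y, [/\ lower_central H n' x, H y & g = [~ x, y]])
  end.

Definition nilpotent_subgroup (H : G -> Prop) : Prop :=
  exists n, forall g, lower_central H n g -> g = 1.

Definition torsion_free_subgroup (H : G -> Prop) : Prop :=
  forall g n, H g -> (0 < n)%N -> g ^+ n = 1 -> g = 1.

Definition abelian_subgroup (H : G -> Prop) : Prop :=
  forall x y, H x -> H y -> x * y = y * x.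

End GroupNotions.

Section GroupRing.
Variable G : groupType.

Definition ZG := {fsfun G -> int with (0 : int)}.

Definition zg_add (a b : ZG) : ZG :=
  [fsfun g in (finsupp a `|` finsupp b)%fset => (a g + b g) | (0 : int)].

Definition zg_mul (a b : ZG) : ZG :=
  [fsfun g in [fset (x * y)%g | x in finsupp a, y in finsupp b]%fset =>
     (\sum_(h <- finsupp a) a h * b (h^-1 * g)%g) | (0 : int)].

Definition zg_one : ZG := [fsfun g in [fset (1%g : G)]%fset => (1 : int) | (0 : int)].

End GroupRing.

Definition C : Type := complex Rdefinitions.R.

Definition is_algebra_morphism (G : groupType) (N : nat)
    (phi : ZG G -> 'M[C]_N) : Prop :=
  [/\ (forall a b, phi (zg_add a b) = phi a + phi b),
      (forall a b, phi (zg_mul a b) = phi a *m phi b)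
    & phi (zg_one G) = 1%:M].

(* Main.v *)
Set Warnings "-all".
Require Import Defs.
From HB Require Import structures.
From mathcomp Require Import all_boot all_order all_algebra.
From mathcomp Require Import finmap complex Rstruct.
From Stdlib Require Import Classical.
Import Order.TTheory GRing.Theory Num.Theory.
Local Open Scope ring_scope.

Section RingPart.
Variable G : groupType.
Implicit Types a b : ZG G.

Definition delta (w : G) : ZG G := [fsfun g in [fset w]%fset => (1 : int) | (0 : int)].
Definition zg0 : ZG G := [fsfun].
Definition zg_neg (a : ZG G) : ZG G := [fsfun g in finsupp a => - a g | (0 : int)].

Lemma deltaE w g : delta w g = if g == w then 1 else 0.
Proof. by rewrite /delta fsfunE inE. Qed.

Lemma zg0E g : zg0 g = 0.
Proof. by rewrite /zg0 fsfunE. Qed.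

Lemma dflt a g : g \notin finsupp a -> a g = 0.
Proof. by move=> h; rewrite fsfun_dflt. Qed.

Lemma zg_negE a g : zg_neg a g = - a g.
Proof.
rewrite /zg_neg fsfunE; case: ifP => // /negbT h.
by rewrite dflt // oppr0.
Qed.

Lemma zg_addE a b g : zg_add a b g = a g + b g.
Proof.
rewrite /zg_add fsfunE; case: ifP => //; rewrite inE => /negbT /norP [ha hb].
by rewrite !dflt.
Qed.

Lemma zg_mulE a b g : zg_mul a b g = \sum_(h <- finsupp a) a h * b (h^-1 * g)%g.
Proof.
rewrite /zg_mul fsfunE; case: ifP => // /negbT Hg.
symmetry; apply: big1_seq => h /andP [_ hin].
case: (boolP ((h^-1 * g)%g \in finsupp b)) => hb; last by rewrite (dflt _ _ hb) mulr0.
exfalso; move/negP: Hg; apply.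
have -> : g = (h * (h^-1 * g))%g by rewrite mulVKg.
by apply: in_imfset2.
Qed.

Lemma finsupp_delta w : finsupp (delta w) = [fset w]%fset.
Proof.
apply/fsetP => g; rewrite mem_finsupp deltaE !inE; by case: (g == w).
Qed.

Lemma zg_mul_deltaE w b g : zg_mul (delta w) b g = b (w^-1 * g)%g.
Proof.
by rewrite zg_mulE finsupp_delta big_seq_fset1 deltaE eqxx mul1r.
Qed.

Lemma delta_mul w v : zg_mul (delta w) (delta v) = delta (w * v)%g.
Proof.
apply/fsfunP => g; rewrite zg_mul_deltaE !deltaE.
have -> : ((w^-1 * g)%g == v) = (g == (w * v)%g).
  by apply/eqP/eqP => [<-|->]; rewrite ?mulVKg ?mulKg.
by [].
Qed.

Lemma zg_one_delta : zg_one G = delta 1%g.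
Proof. by []. Qed.

Lemma powers_inj (w : G) : (forall k, (0 < k)%N -> (w ^+ k)%g <> 1%g) ->
  forall i j, (w ^+ i)%g = (w ^+ j)%g -> i = j.
Proof.
move=> hw.
have key : forall i d, (w ^+ i)%g = (w ^+ (i + d))%g -> d = 0%N.
  move=> i d; rewrite expgnDr => /esym h.
  have h1 : (w ^+ d)%g = 1%g.
    by apply: (@mulgI _ (w ^+ i)%g); rewrite h mulg1.
  by case: d h1 {h} => // d /hw; case.
move=> i j; case: (leqP i j) => [hij|hji] E.
  by have := key i (j - i)%N; rewrite subnKC // => /(_ E) d0; apply/eqP; rewrite eqn_leq hij -subn_eq0 d0.
have := key j (i - j)%N; rewrite subnKC ?(ltnW hji) // => /(_ (esym E)) d0.
by move: hji; rewrite -subn_gt0 d0.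
Qed.

Lemma step_nonzero (w : G) (a : ZG G) :
  (forall k, (0 < k)%N -> (w ^+ k)%g <> 1%g) -> a <> zg0 ->
  zg_add (zg_mul (delta w) a) (zg_neg a) <> zg0.
Proof.
move=> hw ha Heq.
have E : forall g, a (w * g)%g = a g.
  move=> g; have := congr1 (fun f : ZG G => f (w * g)%g) Heq.
  rewrite /= zg_addE zg_mul_deltaE zg_negE zg0E mulKg => /subr0_eq.
  by [].
have Ek : forall k g, a (w ^+ k * g)%g = a g.
  elim => [|k IH] g; first by rewrite expg0 mul1g.
  by rewrite expgS -mulgA E IH.
have : finsupp a != fset0.
  apply/negP => /eqP h; apply: ha; apply/fsfunP => g.
  by rewrite zg0E dflt // h inE.
case/fset0Pn => g0 hg0.
pose s := [seq (w ^+ k * g0)%g | k <- iota 0 (size (finsupp a)).+1].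
have us : uniq s.
  rewrite map_inj_uniq ?iota_uniq // => i j /mulIg; exact: powers_inj.
have sub : {subset s <= finsupp a}.
  move=> x /mapP [k _ ->]; rewrite mem_finsupp Ek -mem_finsupp //.
have := uniq_leq_size us sub.
by rewrite size_map size_iota ltnn.
Qed.

End RingPart.
Arguments delta {G} w.
Arguments zg0 {G}.
Arguments zg_neg {G} a.
Section GroupPart.
Variable G : groupType.
Local Open Scope group_scope.
Variable H : G -> Prop.
Hypothesis sH : is_subgroup H.

Lemma H_comm x y : H x -> H y -> H [~ x, y].
Proof.
move=> hx hy; case: sH => h1 hM hV.
rewrite commgEl conjgE; apply: (hM); first exact: (hV).
by apply: (hM); [exact: (hV) | exact: (hM)].
Qed.

Lemma lc_sub k g : lower_central H k g -> H g.
Proof.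
elim: k g => [|k IH] g //= hg; apply: hg => // s [x [y [hx hy ->]]].
by apply: H_comm => //; apply: IH.
Qed.

Definition Pk k := exists a b, [/\ lower_central H k a, H b & [~ a, b] <> 1].

Lemma find_top : Pk 0 -> (exists n, ~ Pk n) -> exists k, Pk k /\ ~ Pk k.+1.
Proof.
move=> P0 [n Pn].
have : forall d k, Pk k -> ~ Pk (k + d) -> exists k, Pk k /\ ~ Pk k.+1.
  elim => [|d IH] k hk hn; first by rewrite addn0 in hn.
  case: (classic (Pk k.+1)) => h; last by exists k.
  by apply: (IH k.+1) => //; rewrite addSnnS.
by move/(_ n 0%N P0); apply.
Qed.

Lemma get_triple : nilpotent_subgroup H -> ~ abelian_subgroup H ->
  exists x y, [/\ H x, H y, [~ x, y] <> 1, commute [~ x, y] x & commute [~ x, y] y].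
Proof.
move=> [n hn] nab.
have P0 : Pk 0.
  apply: NNPP => hP; apply: nab => x y hx hy.
  apply: NNPP => hxy; apply: hP; exists x, y; split => // /eqP /commgP.
  by move=> c; apply: hxy.
have Pn : ~ Pk n.
  by move=> [a [b [ha _ hab]]]; apply: hab; rewrite (hn _ ha) comm1g.
have [k [[a [b [ha hb hab]]] nk]] := find_top P0 (ex_intro _ n Pn).
have zin : lower_central H k.+1 [~ a, b].
  by move=> K _ hK; apply: hK; exists a, b.
have cz : forall h, H h -> commute [~ a, b] h.
  move=> h hh; apply/commgP/eqP; apply: NNPP => hne.
  by apply: nk; exists [~ a, b], h.
by exists a, b; split => //; [exact: lc_sub ha | apply: cz; exact: lc_sub ha | exact: cz].
Qed.

End GroupPart.
Local Open Scope ring_scope.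
Lemma comm_invmx (F : fieldType) n (Z X : 'M[F]_n) : X \in unitmx ->
  Z *m X = X *m Z -> Z *m invmx X = invmx X *m Z.
Proof.
move=> uX h.
rewrite -[Z *m invmx X]mul1mx -(mulVmx uX) -!mulmxA; congr (_ *m _).
by rewrite !mulmxA -h -mulmxA mulmxV // mulmx1.
Qed.

Lemma eig_unity (F : fieldType) n (X Y Z : 'M[F]_n) (l : F) :
  X \in unitmx -> Y \in unitmx -> Z *m X = X *m Z -> Z *m Y = Y *m Z ->
  X *m Y = Y *m X *m Z -> eigenvalue Z l -> exists2 m, (0 < m)%N & l ^+ m = 1.
Proof.
move=> uX uY cX cY hXY hl.
set E := eigenspace Z l; set V := row_base E.
have rf : row_free V := row_base_free E.
have st : forall A, Z *m A = A *m Z -> stablemx V A.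
  by move=> A cA; rewrite stablemx_row_base comm_mx_stable_eigenspace.
have stZ : stablemx V Z by apply: st.
have stX := st _ cX; have stY := st _ cY.
have stXi := st _ (@comm_invmx _ _ Z X uX cX); have stYi := st _ (@comm_invmx _ _ Z Y uY cY).
have cZ : conjmx V Z = l%:M.
  have hV : (V <= E)%MS by rewrite eq_row_base.
  move/eigenspaceP: hV => hV.
  by rewrite /conjmx hV -scalemxAl mulmxVp // scalemx1.
have c1 : conjmx V 1%:M = 1%:M by rewrite conjmx_scalar.
have uX' : conjmx V X \in unitmx.
  have : conjmx V X *m conjmx V (invmx X) = 1%:M.
    by rewrite -conjmxM ?inE // mulmxV // c1.
  by case/mulmx1_unit.
have uY' : conjmx V Y \in unitmx.
  have : conjmx V Y *m conjmx V (invmx Y) = 1%:M.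
    by rewrite -conjmxM ?inE // mulmxV // c1.
  by case/mulmx1_unit.
have e : conjmx V X *m conjmx V Y = conjmx V Y *m conjmx V X *m l%:M.
  rewrite -cZ -!conjmxM ?inE ?hXY //.
  by apply: stablemxM.
have := congr1 determinant e.
rewrite !det_mulmx det_scalar => e2.
exists (\rank E).
  by rewrite lt0n mxrank_eq0.
apply: (@mulfI _ (\det (conjmx V Y) * \det (conjmx V X))).
  by rewrite mulf_neq0 // -unitfE -unitmxE.
by rewrite mulr1 -e2 mulrC.
Qed.

Theorem mainTheorem3 (G : groupType) :
  (exists H : G -> Prop,
     [/\ is_subgroup H, nilpotent_subgroup H, torsion_free_subgroup H
       & ~ abelian_subgroup H]) ->
  forall (N : nat), (1 <= N)%N ->
  ~ (exists phi : ZG G -> 'M[C]_N,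
       is_algebra_morphism phi /\ injective phi).
Proof.
move=> [H [sH nH tH nab]] [//|n] _ [phi [[hadd hmul hone] inj]].
have [x [y [hx hy hz czx czy]]] := @get_triple _ _ sH nH nab.
set z := [~ x, y]%g in hz czx czy.
have Hz : H z by apply: (@H_comm _ _ sH).
pose M g := phi (delta g).
have MM : forall g h, M (g * h)%g = M g *m M h.
  by move=> g h; rewrite /M -delta_mul hmul.
have M1 : M 1%g = 1 by rewrite /M -zg_one_delta hone.
have MX : forall w k, M (w ^+ k)%g = M w ^+ k.
  move=> w; elim => [|k IH]; first by rewrite expg0 expr0.
  by rewrite expgS exprS MM IH mulmxE.
have MU : forall g, M g \in unitmx.
  move=> g; have : M g *m M g^-1%g = 1%:M by rewrite -MM mulgV M1.
  by case/mulmx1_unit.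
have phi0 : phi ((@zg0 G)) = 0.
  have h : zg_add ((@zg0 G)) ((@zg0 G)) = (@zg0 G).
    by apply/fsfunP => g; rewrite zg_addE zg0E addr0.
  have := hadd ((@zg0 G)) ((@zg0 G)); rewrite h => e.
  by apply: (addrI (phi ((@zg0 G)))); rewrite addr0 -e.
have phiN : forall a, phi (zg_neg a) = - phi a.
  move=> a; have h : zg_add a (zg_neg a) = (@zg0 G).
    by apply/fsfunP => g; rewrite zg_addE zg_negE zg0E subrr.
  have := hadd a (zg_neg a); rewrite h phi0 => /esym /addr0_eq.
  by move=> ->.
have stepE : forall w a, phi (zg_add (zg_mul (delta w) a) (zg_neg a)) = (M w - 1) * phi a.
  by move=> w a; rewrite hadd hmul phiN mulrBl mul1r mulmxE.
have zpow : forall m, (0 < m)%N -> forall k, (0 < k)%N -> ((z ^+ m) ^+ k)%g <> 1%g.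
  move=> m hm k hk; rewrite -expgnA => e; apply: hz.
  by apply: (tH _ (m * k)%N Hz); rewrite ?muln_gt0 ?hm.
set Z := M z.
have claim : forall s : seq C, (forall l, l \in s -> exists2 m, (0 < m)%N & l ^+ m = 1) ->
    exists a, a <> (@zg0 G) /\ exists P : {poly C},
      (\prod_(l <- s) ('X - l%:P)) %| P /\ phi a = horner_mx Z P.
  elim => [|l s IH] hs.
    exists (zg_one G); split.
      move=> e; have := congr1 (fun f : ZG G => f 1%g) e.
      by rewrite /= zg_one_delta deltaE eqxx zg0E.
    exists 1; rewrite big_nil dvdpp; split => //.
    by rewrite rmorph1 hone.
  have [a [ha [P [hP ea]]]] : exists a, a <> (@zg0 G) /\ exists P : {poly C},
      (\prod_(l <- s) ('X - l%:P)) %| P /\ phi a = horner_mx Z P.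
    by apply: IH => l' hl'; apply: hs; rewrite inE hl' orbT.
  have [m hm hlm] := hs l (mem_head l s).
  exists (zg_add (zg_mul (delta (z ^+ m)%g) a) (zg_neg a)); split.
    by apply: step_nonzero => //; apply: zpow.
  exists (('X^m - 1) * P); split.
    rewrite big_cons; apply: dvdp_mul => //.
    by rewrite dvdp_XsubCl /root !hornerE hlm subrr.
  rewrite stepE ea MX rmorphM rmorphB rmorphXn rmorph1.
  by rewrite /= horner_mx_X.
have [s hs] := closed_field_poly_normal (char_poly Z).
rewrite (monicP (char_poly_monic Z)) scale1r in hs.
have hsU : forall l, l \in s -> exists2 m, (0 < m)%N & l ^+ m = 1.
  move=> l hl.
  have hr : root (char_poly Z) l by rewrite hs root_prod_XsubC.
  rewrite -eigenvalue_root_char in hr.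
  apply: (@eig_unity _ _ (M x) (M y) Z l) hr => //.
  - by rewrite /Z -!MM; congr M.
  - by rewrite /Z -!MM; congr M.
  - by rewrite /Z -!MM; congr M; apply: commgC.
have [a [ha [P [hP ea]]]] := claim s hsU.
apply: ha; apply: inj; rewrite phi0 ea.
rewrite -hs in hP; case/dvdpP: hP => q ->.
by rewrite rmorphM /= Cayley_Hamilton mulr0.
Qed.
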